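(* Let $P_n=\{0,1,2,3\}^n$ with order $\le_n$ and $p^m_k$ restriction to the first $k$ coordinates, let $\mathbb{P}$ be their inverse limit and $\mathbb{O}(\mathbb{P})$ the associated limit of order ideals. For $n\in\mathbb{N}$ let $T_n=\{c\in\{0,1,2,3\}^n:c(0)\in\{0,1\}\}$ and let $q^{n+1}_n:\{0,1,2\}^{T_{n+1}}\to\{0,1,2\}^{T_n}$ be given by $q^{n+1}_n(f)(c)=\max\{f(c^\frown0),f(c^\frown1),\min\{f(c^\frown2),1\},2\min\{f(c^\frown3),1\}\}$, with $q^n_k=q^{k+1}_k\circ\dots\circ q^n_{n-1}$. Then $\mathbb{O}(\mathbb{P})$ is order-isomorphic (hence lattice-isomorphic) to the inverse limit $\{(f_n)\in\prod_n\{0,1,2\}^{T_n}:q^{n+1}_n(f_{n+1})=f_n\ \forall n\}$ with the coordinatewise (pointwise) order.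
   Context: $x\le_n y$ iff $x=y$ or (i) there is $l<n$ with $x(k)=y(k)$ for $k<l$, $x(l)=2$, $y(l)=3$, and $x(k)=y(k)\in\{0,1\}$ for $l<k<n$; or (ii) $x(0)=0$, $y(0)=1$ and $x(k)=y(k)\in\{0,1\}$ for $1\le k<n$. $c^\frown i$ denotes the sequence $c$ extended by $i$. $\mathcal{O}(P_n)$ is the set of down-sets of $P_n$ under inclusion, $\downarrow x=\{m:m\le x\}$; for a quotient map $p:Q\to R$ of finite posets, $\hat p(\emptyset)=\emptyset$ and $\hat p(A)=\bigcup_i\downarrow p(a_i)$ over the maximal elements $a_i$ of $A$; $\mathbb{O}(\mathbb{P})=\{(A_n)\in\prod_n\mathcal{O}(P_n):\widehat{p^{n+1}_n}(A_{n+1})=A_n\ \forall n\}$ ordered coordinatewise by inclusion. *)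

(* Defs.v *)
From mathcomp Require Import all_boot.
Set Implicit Arguments. Unset Strict Implicit. Unset Printing Implicit Defensive.

Definition P (n : nat) : finType := {ffun 'I_n -> 'I_4}.

Definition leP (n : nat) (x y : P n) : bool :=
  (x == y)
  || [exists l : 'I_n,
        [forall k : 'I_n, (k < l) ==> (x k == y k)] &&
        (val (x l) == 2) && (val (y l) == 3) &&
        [forall k : 'I_n, (l < k) ==> ((x k == y k) && (val (x k) < 2))]]
  || [exists k0 : 'I_n,
        (val k0 == 0) && (val (x k0) == 0) && (val (y k0) == 1) &&
        [forall k : 'I_n, (0 < k) ==> ((x k == y k) && (val (x k) < 2))]].

Definition downset (n : nat) (A : {set P n}) : Prop :=
  forall x y : P n, leP y x -> x \in A -> y \in A.

Definition restr (n : nat) (x : P n.+1) : P n :=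
  [ffun i : 'I_n => x (widen_ord (leqnSn n) i)].

Definition maximal_in (n : nat) (A : {set P n}) (a : P n) : bool :=
  (a \in A) && [forall b : P n, ((b \in A) && leP a b) ==> (b == a)].

Definition hatp (n : nat) (A : {set P n.+1}) : {set P n} :=
  \bigcup_(a : P n.+1 | maximal_in A a) [set m : P n | leP m (restr a)].

Definition OP : Type :=
  {A : forall n, {set P n} |
     (forall n, downset (A n)) /\ (forall n, hatp (A n.+1) = A n)}.

Definition OP_le (A B : OP) : Prop := forall n, proj1_sig A n \subset proj1_sig B n.

(* T_n = {c in {0,1,2,3}^n : c(0) in {0,1}}  (empty for n = 0) *)
Definition inT (n : nat) (c : P n) : bool :=
  [exists k : 'I_n, (val k == 0) && (val (c k) < 2)].

Definition T (n : nat) : finType := {c : P n | inT c}.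

Definition snoc (n : nat) (c : P n) (i : 'I_4) : P n.+1 :=
  [ffun k : 'I_n.+1 => if unlift ord_max k is Some j then c j else i].

(* f on T_{n+1}, read on all of P_{n+1} (0 outside T_{n+1}; only used on T_{n+1}) *)
Definition extT (n : nat) (f : {ffun T n -> 'I_3}) (c : P n) : nat :=
  if @insub _ (@inT n) (T n) c is Some t then val (f t) else 0.

Definition q (n : nat) (f : {ffun T n.+1 -> 'I_3}) : {ffun T n -> 'I_3} :=
  [ffun t : T n =>
     let e := fun i : 'I_4 => extT f (snoc (val t) i) in
     inord (maxn (maxn (e (inord 0)) (e (inord 1)))
                 (maxn (minn (e (inord 2)) 1) (2 * minn (e (inord 3)) 1)))].

Definition QL : Type :=
  {f : forall n, {ffun T n -> 'I_3} | forall n, q (f n.+1) = f n}.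

Definition QL_le (f g : QL) : Prop :=
  forall n (c : T n), val (proj1_sig f n c) <= val (proj1_sig g n c).

(* Main.v *)
Require Import Defs.
From mathcomp Require Import all_boot zify.
Set Implicit Arguments. Unset Strict Implicit. Unset Printing Implicit Defensive.

Lemma P0_eq (x y : P 0) : x = y.
Proof. by apply/ffunP => -[k Hk]; exfalso; rewrite ltn0 in Hk. Qed.

Lemma T0_empty (t : T 0) : False.
Proof. by case: t => c /existsP [[k Hk]]; exfalso; rewrite ltn0 in Hk. Qed.


Lemma snoc_max (n : nat) (x : P n) i : snoc x i ord_max = i.
Proof. by rewrite ffunE unlift_none. Qed.

Lemma snoc_widen (n : nat) (x : P n) i k : snoc x i (widen_ord (leqnSn n) k) = x k.
Proof.
rewrite ffunE; case: unliftP => [j /= Ej|E].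
  by congr (x _); apply/val_inj; move/(congr1 val): Ej => /=; rewrite /bump leqNgt ltn_ord.
by move/(congr1 val): E => /= E; move: (ltn_ord k); rewrite E ltnn.
Qed.

Lemma restr_snoc (n : nat) (x : P n) i : restr (snoc x i) = x.
Proof. by apply/ffunP => k; rewrite ffunE snoc_widen. Qed.

Lemma snocK (n : nat) (y : P n.+1) : snoc (restr y) (y ord_max) = y.
Proof.
apply/ffunP => k; rewrite ffunE; case: unliftP => [j ->|->] //.
rewrite ffunE; congr (y _); apply/val_inj => /=.
by rewrite /bump leqNgt ltn_ord.
Qed.

Lemma snoc_eq (n : nat) (x y : P n) i j : (snoc x i == snoc y j) = (x == y) && (i == j).
Proof.
apply/eqP/andP => [E|[/eqP-> /eqP->]] //.
by split; apply/eqP; [rewrite -(restr_snoc x i) E restr_snoc | rewrite -(snoc_max x i) E snoc_max].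
Qed.

Lemma ord_split (n : nat) (l : 'I_n.+1) : l = ord_max \/ exists l' : 'I_n, l = widen_ord (leqnSn n) l'.
Proof.
case: l => l Hl; case: (ltnP l n) => H.
  by right; exists (Ordinal H); apply/val_inj.
by left; apply/val_inj => /=; apply/eqP; rewrite eqn_leq H -ltnS Hl.
Qed.


Local Notation leQ := Defs.leP.
Definition E1 n (x y : P n) : bool :=
  [exists l : 'I_n,
        [forall k : 'I_n, (k < l) ==> (x k == y k)] &&
        (val (x l) == 2) && (val (y l) == 3) &&
        [forall k : 'I_n, (l < k) ==> ((x k == y k) && (val (x k) < 2))]].
Definition E2 n (x y : P n) : bool :=
  [exists k0 : 'I_n,
        (val k0 == 0) && (val (x k0) == 0) && (val (y k0) == 1) &&
        [forall k : 'I_n, (0 < k) ==> ((x k == y k) && (val (x k) < 2))]].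

Lemma leP_E n (x y : P n) : leQ x y = (x == y) || E1 x y || E2 x y.
Proof. by []. Qed.

Lemma E1_snoc n (x y : P n) i j :
  E1 (snoc x i) (snoc y j) =
  ((x == y) && (val i == 2) && (val j == 3)) || ((i == j) && (val i < 2) && E1 x y).
Proof.
apply/idP/idP.
  case/existsP => l /andP[/andP[/andP[/forallP H1 H2] H3] /forallP H4].
  case: (ord_split l) => [El|[l' El]]; subst l.
    rewrite !snoc_max in H2 H3; rewrite H2 H3 !andbT; apply/orP; left.
    apply/eqP/ffunP => k; have := H1 (widen_ord (leqnSn n) k).
    by rewrite !snoc_widen /= ltn_ord => /eqP.
  rewrite !snoc_widen in H2 H3.
  have := H4 ord_max; rewrite /= ltn_ord !snoc_max /= => /andP[-> ->] /=.
  apply/orP; right; apply/existsP; exists l'; rewrite H2 H3 !andbT.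
  apply/andP; split; apply/forallP => k.
    by have := H1 (widen_ord (leqnSn n) k); rewrite !snoc_widen.
  by have := H4 (widen_ord (leqnSn n) k); rewrite !snoc_widen.
case/orP.
  case/andP => /andP[/eqP Exy Hi Hj]; subst y; apply/existsP; exists ord_max.
  rewrite !snoc_max Hi Hj /= !andbT; apply/andP; split; apply/forallP => k.
    by case: (ord_split k) => [->|[k' ->]]; rewrite ?ltnn // !snoc_widen eqxx implybT.
  by apply/implyP; rewrite ltnNge -ltnS ltn_ord.
case/andP => /andP[/eqP Eij Hi] /existsP[l /andP[/andP[/andP[/forallP H1 H2] H3] /forallP H4]].
subst j; apply/existsP; exists (widen_ord (leqnSn n) l); rewrite !snoc_widen H2 H3 /= !andbT.
apply/andP; split; apply/forallP => k; case: (ord_split k) => [->|[k' ->]].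
- by rewrite /= ltnNge ltnW.
- by rewrite !snoc_widen; apply: H1.
- by rewrite !snoc_max eqxx Hi implybT.
- by rewrite !snoc_widen; apply: H4.
Qed.

Lemma E2_snoc n (x y : P n) i j :
  E2 (snoc x i) (snoc y j) =
  ((n == 0) && (val i == 0) && (val j == 1)) || ((0 < n) && (i == j) && (val i < 2) && E2 x y).
Proof.
apply/idP/idP.
  case/existsP => k0 /andP[/andP[/andP[/eqP H0 H1] H2] /forallP H3].
  case: (ord_split k0) => [Ek|[k' Ek]]; subst k0.
    move: H0 => /= H0; have -> : (n == 0) = true by apply/eqP.
    by rewrite !snoc_max in H1 H2; rewrite H1 H2.
  rewrite !snoc_widen in H1 H2; move: H0 => /= H0.
  have n0 : 0 < n by rewrite -H0 ltn_ord.
  have := H3 ord_max; rewrite /= n0 !snoc_max /= => /andP[-> ->].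
  apply/orP; right; rewrite /=; apply/existsP; exists k'; rewrite /= H0 H1 H2 /=.
  by apply/forallP => k; have := H3 (widen_ord (leqnSn n) k); rewrite !snoc_widen.
case/orP.
  case/andP => /andP[/eqP En Hi Hj]; subst n; apply/existsP; exists ord_max.
  rewrite !snoc_max Hi Hj /=; apply/forallP => k; apply/implyP.
  by case: k => [[|k]] //; rewrite ltnS ltn0.
case/andP => /andP[/andP[n0 /eqP Eij] Hi] /existsP[k0 /andP[/andP[/andP[H0 H1] H2] /forallP H3]].
subst j; apply/existsP; exists (widen_ord (leqnSn n) k0); rewrite !snoc_widen H0 H1 H2 /=.
apply/forallP => k; case: (ord_split k) => [->|[k' ->]].
- by rewrite !snoc_max eqxx Hi implybT.
- by rewrite !snoc_widen; apply: H3.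
Qed.

Lemma E2_0 (x y : P 0) : E2 x y = false.
Proof. by apply/existsP => -[[k Hk]]; exfalso; rewrite ltn0 in Hk. Qed.

Lemma leP_snoc n (x y : P n) i j :
  leQ (snoc x i) (snoc y j) =
  ((x == y) && ((i == j) || ((val i == 2) && (val j == 3)) || ((n == 0) && (val i == 0) && (val j == 1))))
  || ((i == j) && (val i < 2) && leQ x y).
Proof.
rewrite !leP_E E1_snoc E2_snoc snoc_eq.
case: n x y => [|n] x y.
  rewrite (P0_eq x y) eqxx E2_0 /=.
  by case: (i == j); case: (val i == 2); case: (val j == 3); case: (val i < 2); case: E1;
     case: (val i == 0); case: (val j == 1).
rewrite /=.
by case: (x == y); case: (i == j); case: (val i == 2); case: (val j == 3); case: (val i < 2); case: E1;
     case: E2.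
Qed.

Fixpoint side (n : nat) : P n -> bool :=
  match n with
  | 0 => fun _ => false
  | m.+1 => fun x => if (m == 0) || (1 < x ord_max) then odd (x ord_max) else side (restr x)
  end.

Definition code (m : nat) (s : bool) (i : 'I_4) : 'I_4 :=
  inord (if m == 0 then i./2 else if i < 2 then nat_of_ord i else if s then 3 else 2).

Fixpoint chi (n : nat) : P n -> P n :=
  match n with
  | 0 => fun x => x
  | m.+1 => fun x => snoc (chi (restr x)) (code m (side (restr x)) (x ord_max))
  end.

Lemma side_snoc n (x : P n) i :
  side (snoc x i) = if (n == 0) || (1 < i) then odd i else side x.
Proof. by rewrite /= restr_snoc snoc_max. Qed.

Lemma chi_snoc n (x : P n) i : chi (snoc x i) = snoc (chi x) (code n (side x) i).
Proof. by rewrite /= restr_snoc snoc_max. Qed.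

Lemma code_val m s i :
  val (code m s i) = if m == 0 then i./2 else if i < 2 then nat_of_ord i else if s then 3 else 2.
Proof.
rewrite /code /= inordK //; case: (m == 0); first by case: i => [[|[|[|[|k]]]]].
by case: ifP => [/ltnW/leqW/leqW|_]; last case: s.
Qed.

Lemma nat_inj0 a b : a < 4 -> b < 4 -> a./2 = b./2 -> odd a = odd b -> a = b.
Proof. by case: a => [|[|[|[|a]]]] //; case: b => [|[|[|[|b]]]]. Qed.

Lemma nat_inj1 a b (s t : bool) : a < 4 -> b < 4 ->
  (if a < 2 then a else if s then 3 else 2) = (if b < 2 then b else if t then 3 else 2) ->
  (if 1 < a then odd a else s) = (if 1 < b then odd b else t) -> a = b /\ s = t.
Proof. by case: a => [|[|[|[|a]]]] //; case: b => [|[|[|[|b]]]] //; case: s; case: t. Qed.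

Lemma chi_side_inj n (x y : P n) : chi x = chi y -> side x = side y -> x = y.
Proof.
elim: n x y => [|n IH] x y; first by rewrite (P0_eq x y).
rewrite -(snocK x) -(snocK y) !chi_snoc !side_snoc.
move: (restr x) (restr y) (x ord_max) (y ord_max) => x' y' i j.
move/eqP; rewrite snoc_eq => /andP[/eqP Hc /eqP/(congr1 val)]; rewrite !code_val.
case: (n =P 0) => [En|_] /= Hcode Hside.
  subst n; rewrite (P0_eq x' y'); congr snoc; apply/val_inj.
  exact: nat_inj0 (ltn_ord i) (ltn_ord j) Hcode Hside.
have [Eij Es] := nat_inj1 (ltn_ord i) (ltn_ord j) Hcode Hside.
by rewrite (IH x' y' Hc Es) (val_inj Eij).
Qed.

Lemma nat_lePa (z : bool) a b (s : bool) : a < 4 -> b < 4 ->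
  (a == b) || (a == 2) && (b == 3) || z && (a == 0) && (b == 1) =
  (a == b) || ((if z then a./2 else if a < 2 then a else if s then 3 else 2) ==
               (if z then b./2 else if b < 2 then b else if s then 3 else 2))
            && ~~ (if z || (1 < a) then odd a else s) && (if z || (1 < b) then odd b else s).
Proof. by case: a => [|[|[|[|a]]]] //; case: b => [|[|[|[|b]]]] //; case: s; case: z. Qed.

Lemma nat_lePb a b (s t : bool) : a < 4 -> b < 4 -> s != t ->
  (a == b) && (a < 2) && (~~ s && t) =
  ((if a < 2 then a else if s then 3 else 2) == (if b < 2 then b else if t then 3 else 2))
            && ~~ (if 1 < a then odd a else s) && (if 1 < b then odd b else t).
Proof. by case: a => [|[|[|[|a]]]] //; case: b => [|[|[|[|b]]]] //; case: s; case: t. Qed.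

Lemma leP_chi n (x y : P n) :
  leQ x y = (x == y) || ((chi x == chi y) && ~~ side x && side y).
Proof.
elim: n x y => [|n IH] x y.
  by rewrite (P0_eq x y) leP_E eqxx.
rewrite -(snocK x) -(snocK y) leP_snoc !chi_snoc !side_snoc !snoc_eq IH.
move: (restr x) (restr y) (x ord_max) (y ord_max) => x' y' i j.
rewrite -!val_eqE !code_val.
case: (x' =P y') => [<-|Nxy] /=.
  rewrite !eqxx /= andbT.
  rewrite -(nat_lePa (n == 0) (side x')) ?ltn_ord //.
  by case: (val i == val j); rewrite /= ?orbF.
clear x y; case: (n =P 0) => [En|/eqP/negbTE n0].
  by subst n; case: Nxy; apply: P0_eq.
rewrite /=.
case Ec: (chi x' == chi y'); rewrite /= ?andbF //.
have Nst : side x' != side y'.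
  by apply/negP => /eqP Es; apply: Nxy; apply: chi_side_inj (eqP Ec) Es.
by rewrite nat_lePb ?ltn_ord.
Qed.

Lemma inT_snoc n (c : P n) j : inT (snoc c j) = ((n == 0) && (val j < 2)) || inT c.
Proof.
apply/existsP/orP.
  case=> k /andP[/eqP H0 H1]; case: (ord_split k) => [Ek|[k' Ek]]; subst k.
    by left; move: H0 => /= ->; rewrite snoc_max in H1; rewrite H1.
  by right; apply/existsP; exists k'; rewrite snoc_widen in H1; rewrite H1 -H0 eqxx.
case.
  case/andP => /eqP En Hj; exists ord_max; rewrite snoc_max Hj andbT; exact/eqP.
case/existsP => k /andP[H0 H1]; exists (widen_ord (leqnSn n) k).
by rewrite snoc_widen H0 H1.
Qed.

Lemma inT_pos n (c : P n) : inT c -> 0 < n.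
Proof. by case/existsP => k _; apply: leq_ltn_trans (leq0n k) (ltn_ord k). Qed.

Lemma inT_chi n (x : P n) : 0 < n -> inT (chi x).
Proof.
elim: n x => [|n IH] x // _.
rewrite -(snocK x) chi_snoc inT_snoc.
case: (n =P 0) => [En|/eqP Nn]; last by rewrite IH ?orbT // lt0n.
subst n; rewrite /= code_val /=.
by case: (x ord_max) => [[|[|[|[|k]]]]].
Qed.

Lemma chi_surj n (c : P n) (s : bool) : inT c -> exists x, chi x = c /\ side x = s.
Proof.
elim: n c s => [|n IH] c s; first by move/inT_pos.
rewrite -(snocK c) inT_snoc; move: (restr c) (c ord_max) => c' j.
case: (n =P 0) => [En|/eqP Nn].
  subst n => Hj'; have Hj : j < 2.
    by case/orP: Hj' => [/andP[]|/inT_pos].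
  exists (snoc c' (inord (2 * j + s))).
  have E : 2 * j + s < 4 by case: (nat_of_ord j) Hj => [|[|]] //; case: s.
  rewrite chi_snoc side_snoc (P0_eq (chi c') c') inordK //; split.
    congr snoc; apply/val_inj; rewrite code_val /= inordK //.
    by clear E; case: (nat_of_ord j) Hj => [|[|]] //; case: s.
  rewrite /= oddD oddM /=; by clear E; case: s.
move=> H; have Hc : inT c' by case/orP: H => [/andP[]|].
have n0 : (n == 0) = false by apply/negbTE.
case: (ltnP j 2) => Hj.
  have [x' [Hx Hs]] := IH c' s Hc.
  exists (snoc x' j); rewrite chi_snoc side_snoc n0 /= ltnNge -ltnS Hj /= Hs; split => //.
  by rewrite Hx; congr snoc; apply/val_inj; rewrite code_val n0 Hj.
have [x' [Hx Hs]] := IH c' (val j == 3) Hc.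
have E : 2 + s < 4 by case: s.
exists (snoc x' (inord (2 + s))); rewrite chi_snoc side_snoc n0 /= inordK //; split.
  rewrite Hx; congr snoc; apply/val_inj; rewrite code_val n0 inordK // Hs.
  by clear E; case: s; clear Hs; case: j Hj {H} => [[|[|[|[|k]]]] Hk].
by clear E; case: s.
Qed.

Definition pt n (c : P n) (s : bool) : P n :=
  odflt c [pick x | (chi x == c) && (side x == s)].

Lemma pt_spec n (c : P n) s : inT c -> chi (pt c s) = c /\ side (pt c s) = s.
Proof.
move=> Hc; rewrite /pt; case: pickP => [x /andP[/eqP -> /eqP ->]|H] //.
have [x [Hx Hs]] := chi_surj s Hc.
by move: (H x); rewrite Hx Hs !eqxx.
Qed.

Lemma extT_Sub n (f : {ffun T n -> 'I_3}) c (Hc : inT c) :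
  extT f c = val (f (Sub c Hc)).
Proof. by rewrite /extT insubT. Qed.

Lemma extT_val n (f : {ffun T n -> 'I_3}) (t : T n) : extT f (val t) = val (f t).
Proof. by rewrite /extT valK. Qed.

Lemma extT_le2 n (f : {ffun T n -> 'I_3}) c : extT f c <= 2.
Proof. by rewrite /extT; case: insub => [t|] //; rewrite -ltnS ltn_ord. Qed.

Lemma extT_mono n (f g : {ffun T n -> 'I_3}) c :
  (forall t, val (f t) <= val (g t)) -> extT f c <= extT g c.
Proof. by move=> H; rewrite /extT; case: insub. Qed.

Lemma extT_q n (f : {ffun T n.+1 -> 'I_3}) c : inT c ->
  extT (q f) c =
  maxn (maxn (extT f (snoc c (inord 0))) (extT f (snoc c (inord 1))))
       (maxn (minn (extT f (snoc c (inord 2))) 1) (2 * minn (extT f (snoc c (inord 3))) 1)).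
Proof.
move=> Hc; rewrite (extT_Sub _ Hc) ffunE /= inordK //.
have := extT_le2 f (snoc c (inord 0)); have := extT_le2 f (snoc c (inord 1)).
have := extT_le2 f (snoc c (inord 2)); have := extT_le2 f (snoc c (inord 3)).
lia.
Qed.

Definition Psi n (f : {ffun T n -> 'I_3}) : {set P n} :=
  [set x : P n | side x < extT f (chi x)].

Definition Phi n (A : {set P n}) : {ffun T n -> 'I_3} :=
  [ffun t : T n => inord ((pt (val t) false \in A) + (pt (val t) true \in A))].

Lemma hatp_mem n (A : {set P n.+1}) m :
  (m \in hatp A) = [exists a, maximal_in A a && leQ m (restr a)].
Proof.
apply/bigcupP/existsP => [[a Ha]|[a /andP[Ha Hm]]].
  by rewrite inE => Hm; exists a; rewrite Ha.
by exists a; rewrite // inE.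
Qed.

Lemma maximal_Psi n (f : {ffun T n.+1 -> 'I_3}) a :
  maximal_in (Psi f) a = (extT f (chi a) == side a + 1).
Proof.
have Hc : inT (chi a) by apply: inT_chi.
have Hle := extT_le2 f (chi a).
rewrite /maximal_in inE; apply/idP/idP.
  case/andP => Ha /forallP H; case Es: (side a) Ha => Ha.
    by apply/eqP; move: Ha Hle; rewrite /=; lia.
  have Hv : ~~ (1 < extT f (chi a)).
    apply/negP => Hv.
    have [Hh1 Hh2] := pt_spec true Hc.
    have := H (pt (chi a) true); rewrite inE Hh1 Hh2 leP_chi Hh1 eqxx Es Hh2 /=.
    rewrite Hv orbT /= => /eqP Eh.
    by move: Hh2; rewrite Eh Es.
  apply/eqP; move: Ha Hv; rewrite /= -leqNgt; lia.
move/eqP => Hv; rewrite Hv addn1 ltnSn /=; apply/forallP => b; apply/implyP.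
case/andP; rewrite inE leP_chi => Hb /orP[/eqP->//|/andP[/andP[/eqP Ec Hsa] Hsb]].
by move: Hb; rewrite Hsb -Ec Hv (negbTE Hsa).
Qed.

Definition ee n (f : {ffun T n.+1 -> 'I_3}) (c : P n) (k : nat) := extT f (snoc c (inord k)).

Lemma ee_le2 n f (c : P n) k : ee f c k <= 2.
Proof. exact: extT_le2. Qed.

Lemma extT_q' n (f : {ffun T n.+1 -> 'I_3}) c : inT c ->
  extT (q f) c = maxn (maxn (ee f c 0) (ee f c 1)) (maxn (minn (ee f c 2) 1) (2 * minn (ee f c 3) 1)).
Proof. exact: extT_q. Qed.

Lemma extT_chi_snoc n (n0 : 0 < n) (f : {ffun T n.+1 -> 'I_3}) (x : P n) i :
  extT f (chi (snoc x i)) = ee f (chi x) (if i < 2 then nat_of_ord i else if side x then 3 else 2).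
Proof. by rewrite chi_snoc /code (negbTE (lt0n_neq0 n0)). Qed.

Lemma side_snoc' n (n0 : 0 < n) (x : P n) i :
  side (snoc x i) = if 1 < i then odd i else side x.
Proof. by rewrite side_snoc (negbTE (lt0n_neq0 n0)). Qed.

Lemma wit n (n0 : 0 < n) (f : {ffun T n.+1 -> 'I_3}) (m x : P n) k : k < 4 -> chi x = chi m -> leQ m x ->
  ee f (chi m) (if k < 2 then k else if side x then 3 else 2) = (if 1 < k then odd k else side x) + 1 ->
  exists a, maximal_in (Psi f) a && leQ m (restr a).
Proof.
move=> Hk Ec Hle Hv; exists (snoc x (inord k)).
by rewrite maximal_Psi restr_snoc Hle andbT extT_chi_snoc // side_snoc' // inordK // Ec Hv.
Qed.

Lemma hatp_Psi n (n0 : 0 < n) (f : {ffun T n.+1 -> 'I_3}) : hatp (Psi f) = Psi (q f).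
Proof.
apply/setP => m; rewrite hatp_mem inE.
have Hc := inT_chi m n0; rewrite extT_q' //.
have B0 := ee_le2 f (chi m) 0; have B1 := ee_le2 f (chi m) 1.
have B2 := ee_le2 f (chi m) 2; have B3 := ee_le2 f (chi m) 3.
apply/existsP/idP.
  case=> a /andP[]; rewrite -(snocK a) maximal_Psi restr_snoc extT_chi_snoc // side_snoc' //.
  move: (restr a) (a ord_max) => x i /eqP Hv.
  rewrite leP_chi => /orP[/eqP Ex|/andP[/andP[/eqP Ec Hsm] Hsx]].
    subst x; case: i Hv => [[|[|[|[|k]]]] Hk] //=; case: (side m) => /= Hv; lia.
  rewrite -Ec (negbTE Hsm) Hsx in Hv *.
  case: i Hv => [[|[|[|[|k]]]] Hk] //= Hv; lia.
have [Hh1 Hh2] := pt_spec true Hc.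
set h := pt (chi m) true in Hh1 Hh2.
case Es: (side m) => H.
  have Hmm : leQ m m by rewrite leP_chi eqxx.
  case E0: (ee f (chi m) 0 == 2).
    by apply: (@wit n n0 f m m 0) => //=; rewrite Es (eqP E0).
  case E1: (ee f (chi m) 1 == 2).
    by apply: (@wit n n0 f m m 1) => //=; rewrite Es (eqP E1).
  case E3: (ee f (chi m) 3 == 2).
    by apply: (@wit n n0 f m m 3) => //=; rewrite Es (eqP E3).
  apply: (@wit n n0 f m m 2) => //=; rewrite Es /=.
  move: H E0 E1 E3 => /=; lia.
have Hmh : leQ m h by rewrite leP_chi Hh1 eqxx Es Hh2 orbT.
have Hmm : leQ m m by rewrite leP_chi eqxx.
case E0: (0 < ee f (chi m) 0).
  case E0': (ee f (chi m) 0 == 2).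
    by apply: (@wit n n0 f m h 0) => //=; rewrite Hh2 (eqP E0').
  by apply: (@wit n n0 f m m 0) => //=; rewrite Es /=; move: E0 E0'; lia.
case E1: (0 < ee f (chi m) 1).
  case E1': (ee f (chi m) 1 == 2).
    by apply: (@wit n n0 f m h 1) => //=; rewrite Hh2 (eqP E1').
  by apply: (@wit n n0 f m m 1) => //=; rewrite Es /=; move: E1 E1'; lia.
case E2: (0 < ee f (chi m) 2).
  case E2': (ee f (chi m) 2 == 2).
    by apply: (@wit n n0 f m m 3) => //=; rewrite Es /= (eqP E2').
  by apply: (@wit n n0 f m m 2) => //=; rewrite Es /=; move: E2 E2'; lia.
case E3': (ee f (chi m) 3 == 2).
  by apply: (@wit n n0 f m h 3) => //=; rewrite Hh2 /= (eqP E3').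
by apply: (@wit n n0 f m h 2) => //=; rewrite Hh2 /=; move: H E0 E1 E2 E3'; rewrite /=; lia.
Qed.

Lemma Phi_Psi n (f : {ffun T n -> 'I_3}) : Phi (Psi f) = f.
Proof.
apply/ffunP => t; rewrite ffunE; apply/val_inj.
have Hc : inT (val t) := valP t.
have [l1 l2] := pt_spec false Hc; have [h1 h2] := pt_spec true Hc.
rewrite !inE l1 l2 h1 h2 extT_val /= inordK.
  by case: (f t) => [[|[|[|k]]] Hk].
by case: (0 < f t); case: (1 < f t).
Qed.

Lemma Psi_Phi n (n0 : 0 < n) (A : {set P n}) : downset A -> Psi (Phi A) = A.
Proof.
move=> Hd; apply/setP => x; rewrite inE.
have Hc := inT_chi x n0.
rewrite (extT_Sub _ Hc) ffunE /=.
have [l1 l2] := pt_spec false Hc; have [h1 h2] := pt_spec true Hc.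
have Hlh : leQ (pt (chi x) false) (pt (chi x) true) by rewrite leP_chi l1 h1 l2 h2 eqxx orbT.
rewrite inordK; last by case: (_ \in _); case: (_ \in _).
case Es: (side x).
  have Ex : x = pt (chi x) true by apply: chi_side_inj; rewrite ?h1 ?h2.
  rewrite [in x \in A]Ex; case Eh: (pt (chi x) true \in A).
    by rewrite (Hd _ _ Hlh Eh).
  by case: (_ \in A).
have Ex : x = pt (chi x) false by apply: chi_side_inj; rewrite ?l1 ?l2.
rewrite [in x \in A]Ex; case Eh: (pt (chi x) true \in A).
  by rewrite (Hd _ _ Hlh Eh).
by case: (_ \in A).
Qed.

Lemma Psi_down n (f : {ffun T n -> 'I_3}) : downset (Psi f).
Proof.
move=> x y; rewrite leP_chi => /orP[/eqP->//|/andP[/andP[/eqP Ec Hy] Hx]].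
by rewrite !inE -Ec (negbTE Hy) Hx => /ltnW.
Qed.

Lemma Psi_mono n (f g : {ffun T n -> 'I_3}) :
  (forall t, val (f t) <= val (g t)) -> Psi f \subset Psi g.
Proof.
move=> H; apply/subsetP => x; rewrite !inE => Hx.
exact: leq_trans Hx (extT_mono _ H).
Qed.

Lemma Phi_mono n (A B : {set P n}) : A \subset B -> forall t, val (Phi A t) <= val (Phi B t).
Proof.
move=> /subsetP H t; rewrite !ffunE /= !inordK; last 2 first.
- by case: (_ \in B); case: (_ \in B).
- by case: (_ \in A); case: (_ \in A).
apply: leq_add.
  by case E: (_ \in A) => //; rewrite (H _ E).
by case E: (_ \in A) => //; rewrite (H _ E).
Qed.

Lemma down0 (A : {set P 0}) : downset A.
Proof. by move=> x y _; rewrite (P0_eq y x). Qed.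

Lemma leQ0 (x y : P 0) : leQ x y.
Proof. by rewrite (P0_eq x y) leP_chi eqxx. Qed.

Lemma hatp0_mono (f g : {ffun T 1 -> 'I_3}) :
  (forall t, val (f t) <= val (g t)) -> hatp (Psi f) \subset hatp (Psi g).
Proof.
move=> Hfg; apply/subsetP => m; rewrite !hatp_mem => /existsP[a /andP[Ha _]].
apply/existsP; rewrite maximal_Psi in Ha.
have Hc := inT_chi a (isT : 0 < 1).
have Hm := extT_mono (chi a) Hfg.
have Hle := extT_le2 g (chi a).
case E: (extT g (chi a) == side a + 1).
  by exists a; rewrite maximal_Psi E leQ0.
have [h1 h2] := pt_spec true Hc.
exists (pt (chi a) true); rewrite maximal_Psi h1 h2 leQ0 andbT.
move/eqP: Ha => Ha; move/negbT/eqP: E => E; apply/eqP.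
by case: (side a) Ha E => Ha E; move: Ha E Hm Hle; rewrite /=; lia.
Qed.

From Stdlib Require Import FunctionalExtensionality ProofIrrelevance.

Lemma OP_eq (A B : OP) : (forall n, proj1_sig A n = proj1_sig B n) -> A = B.
Proof.
case: A B => [A HA] [B HB] /= E.
have E' : A = B := functional_extensionality_dep _ _ E.
subst B; f_equal; apply: proof_irrelevance.
Qed.

Lemma QL_eq (f g : QL) : (forall n, proj1_sig f n = proj1_sig g n) -> f = g.
Proof.
case: f g => [f Hf] [g Hg] /= E.
have E' : f = g := functional_extensionality_dep _ _ E.
subst g; f_equal; apply: proof_irrelevance.
Qed.

Lemma phi_ok (A : OP) n : q (Phi (proj1_sig A n.+1)) = Phi (proj1_sig A n).
Proof.
case: A => A [Hd Hh] /=; case: n => [|n].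
  by apply/ffunP => t; case: (T0_empty t).
have E := Psi_Phi (isT : 0 < n.+2) (Hd n.+2).
by rewrite -(Hh n.+1) -{2}E hatp_Psi // Phi_Psi.
Qed.

Definition phi (A : OP) : QL := exist _ (fun n => Phi (proj1_sig A n)) (phi_ok A).

Definition psiF (f : QL) (n : nat) : {set P n} :=
  match n return {set P n} with
  | 0 => hatp (Psi (proj1_sig f 1))
  | m.+1 => Psi (proj1_sig f m.+1)
  end.

Lemma psi_ok (f : QL) :
  (forall n, downset (psiF f n)) /\ (forall n, hatp (psiF f n.+1) = psiF f n).
Proof.
split; first by case=> [|n]; [apply: down0 | apply: Psi_down].
case=> [|n] //=.
by rewrite hatp_Psi // (proj2_sig f n.+1).
Qed.

Definition psi (f : QL) : OP := exist _ (psiF f) (psi_ok f).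

Theorem mainTheorem19 :
  exists phi : OP -> QL,
    bijective phi /\ (forall A B : OP, OP_le A B <-> QL_le (phi A) (phi B)).
Proof.
exists phi; split.
  exists psi.
    move=> A; apply: OP_eq => n; case: A => A [Hd Hh] /=.
    case: n => [|n] /=.
      by rewrite Psi_Phi // (Hh 0).
    by rewrite Psi_Phi.
  move=> f; apply: QL_eq => n /=.
  case: n => [|n] /=.
    by apply/ffunP => t; case: (T0_empty t).
  by rewrite Phi_Psi.
move=> A B; split.
  by move=> H n c /=; apply: Phi_mono.
case: A B => A [HdA HhA] [B [HdB HhB]] /= H n /=.
case: n => [|n].
  rewrite -(HhA 0) -(HhB 0) -(Psi_Phi (isT : 0 < 1) (HdA 1)) -(Psi_Phi (isT : 0 < 1) (HdB 1)).
  exact: hatp0_mono (H 1).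
rewrite -(Psi_Phi (isT : 0 < n.+1) (HdA n.+1)) -(Psi_Phi (isT : 0 < n.+1) (HdB n.+1)).
exact: Psi_mono (H n.+1).
Qed.
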